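(* Let $G$ be a twin-free simple graph on vertex set $\{1,\dots,n\}$, and suppose that for some $1\le m\le n$ the set $\{1,2,\dots,m\}$ is a minimal identifying code of $G$ (i.e. an identifying code no proper subset of which is an identifying code). Then the lexicographic algorithm (Algorithm 1) applied to $G$ returns exactly $\{1,2,\dots,m\}$.
   Context: Vertices of $G$ are identified with the integers $1,\dots,n$ and ordered by the usual order. For a vertex $v$, $N(v)=\{v\}\cup\{w : vw\in E(G)\}$ is its closed neighbourhood. A set $C\subseteq V(G)$ is an identifying code if the sets $N(v)\cap C$, $v\in V(G)$, are all nonempty and pairwise distinct. $G$ is twin-free if $N(v)\neq N(w)$ for all distinct vertices $v,w$. The lexicographic algorithm (Algorithm 1): set $C_0=\emptyset$. For $j=1,2,\dots,n$ in turn: (i) if $N(j)\cap C_{j-1}=\emptyset$, set $C_j=C_{j-1}\cup\{\min N(j)\}$; (ii) otherwise, if there exists $k\in\{1,\dots,j-1\}$ with $N(k)\cap C_{j-1}=N(j)\cap C_{j-1}$, let $k$ be the least such index; if $N(j)\neq N(k)$ set $C_j=C_{j-1}\cup\{\min(N(j)\triangle N(k))\}$, while if $N(j)=N(k)$ the algorithm stops immediately and returns ''failure''; (iii) otherwise set $C_j=C_{j-1}$. If the algorithm never fails, it returns $C_n$. Here $\triangle$ denotes symmetric difference. *)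

(* Defs.v *)
(* Vertices 1..n of the paper are represented by 'I_n,
   paper vertex v <-> ordinal v-1; the usual order is preserved. *)
From mathcomp Require Import all_boot.
Set Implicit Arguments. Unset Strict Implicit. Unset Printing Implicit Defensive.

Section Defs.
Variable n : nat.
Variable e : rel 'I_n.

Definition simple_graph := symmetric e /\ irreflexive e.

Definition cnbhd (v : 'I_n) : {set 'I_n} := [set w | (w == v) || e v w].

Definition twin_free := forall v w : 'I_n, cnbhd v = cnbhd w -> v = w.

Definition identifying_code (C : {set 'I_n}) :=
  (forall v, cnbhd v :&: C != set0) /\
  (forall v w, v != w -> cnbhd v :&: C != cnbhd w :&: C).

Definition minimal_identifying_code (C : {set 'I_n}) :=
  identifying_code C /\ (forall C' : {set 'I_n}, C' \proper C -> ~ identifying_code C').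

Definition set_min (A : {set 'I_n}) : option 'I_n :=
  [pick x in A | [forall y in A, (x <= y)%N]].

Definition symdiff (A B : {set 'I_n}) : {set 'I_n} := (A :\: B) :|: (B :\: A).

(* one step of Algorithm 1 at vertex j, given C_{j-1}; None = failure *)
Definition lex_step (j : 'I_n) (C : {set 'I_n}) : option {set 'I_n} :=
  if cnbhd j :&: C == set0 then
    omap (fun x => x |: C) (set_min (cnbhd j))
  else
    match [pick k : 'I_n | [&& (k < j)%N, cnbhd k :&: C == cnbhd j :&: C &
                       [forall k' : 'I_n, ((k' < j)%N && (cnbhd k' :&: C == cnbhd j :&: C))
                                           ==> (k <= k')%N]]] with
    | Some k =>
        if cnbhd j != cnbhd k then
          omap (fun x => x |: C) (set_min (symdiff (cnbhd j) (cnbhd k)))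
        else None
    | None => Some C
    end.

Definition lex_algorithm : option {set 'I_n} :=
  foldl (fun oC j => obind (lex_step j) oC) (Some set0) (ord_enum n).

End Defs.

(* Main.v *)
Require Import Defs.
From mathcomp Require Import all_boot.

Section Proof.
Variables (n : nat) (e : rel 'I_n) (m : nat).
Hypothesis (tf : twin_free e).
Let Cs : {set 'I_n} := [set i : 'I_n | (i < m)%N].
Hypothesis (hid : identifying_code e Cs).

Local Notation T v C := (cnbhd e v :&: C).

Lemma set_minP (A : {set 'I_n}) : A != set0 ->
  exists x, set_min A = Some x /\ x \in A /\ forall y, y \in A -> (x <= y)%N.
Proof.
move=> hA; rewrite /set_min; case: pickP => [a /andP[aA /forallP H]|H0].
  exists a; split=> //; split=> // y yA; by move/(_ y): H => /implyP; apply.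
case/set0Pn: hA => x0 xA.
have [y0 yA ymin] := arg_minnP (fun i : 'I_n => nat_of_ord i) xA.
move: (H0 y0) => /negP; case; apply/andP; split; first exact: yA. apply/forallP => z.
by apply/implyP; apply: ymin.
Qed.

Lemma mono (C C' : {set 'I_n}) v w : C \subset C' -> T v C' = T w C' -> T v C = T w C.
Proof.
move=> sub h.
have E : forall u, T u C = T u C' :&: C.
  by move=> u; rewrite -setIA (setIidPr sub).
by rewrite E h -E.
Qed.

Lemma mono0 (C C' : {set 'I_n}) v : C \subset C' -> T v C != set0 -> T v C' != set0.
Proof.
move=> sub; apply: contraNneq => h; apply/eqP; apply/eqP; rewrite -subset0 -h.
by apply: setIS.
Qed.

Arguments mono {C C' v w}.
Arguments mono0 {C C' v}.

Definition Inv (j : nat) (C : {set 'I_n}) :=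
  C \subset Cs /\ (forall v : 'I_n, (v < j)%N -> T v C != set0) /\
  (forall v w : 'I_n, (v < j)%N -> (w < j)%N -> v != w -> T v C != T w C).

Lemma extend (j : 'I_n) (C C' : {set 'I_n}) : Inv j C -> C \subset C' -> C' \subset Cs ->
  T j C' != set0 -> (forall w : 'I_n, (w < j)%N -> T j C' != T w C') -> Inv j.+1 C'.
Proof.
move=> [s1 [ne di]] sub s2 nej dj; split=> //; split.
  move=> v; rewrite ltnS leq_eqVlt => /orP[/eqP vj|vj].
    by rewrite (ord_inj vj).
  by apply: mono0 sub (ne _ vj).
move=> v w; rewrite ltnS leq_eqVlt => /orP[/eqP vj|vj]; rewrite ltnS leq_eqVlt => /orP[/eqP wj|wj] vw.
- by case/negP: vw; apply/eqP; apply: ord_inj; rewrite vj wj.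
- by rewrite (ord_inj vj); apply: dj.
- rewrite (ord_inj wj).
  by rewrite eq_sym; apply: dj.
- by apply: contra (di _ _ vj wj vw) => /eqP h; apply/eqP; apply: mono sub h.
Qed.

Lemma CsP (x y : 'I_n) : y \in Cs -> (x <= y)%N -> x \in Cs.
Proof. by rewrite !inE => hy hxy; apply: leq_ltn_trans hxy hy. Qed.

Lemma step (j : 'I_n) (C : {set 'I_n}) : Inv j C -> exists C', lex_step e j C = Some C' /\ Inv j.+1 C'.
Proof.
move=> inv; have [s1 [ne di]] := inv.
case: hid => hne hdi.
rewrite /lex_step; case: ifP => [/eqP h0|h0].
  have jN : j \in cnbhd e j by rewrite inE eqxx.
  have [x [-> [xN xmin]]] := @set_minP (cnbhd e j) (introT (set0Pn _) (ex_intro _ j jN)).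
  have xC : x \in Cs.
    case/set0Pn: (hne j) => y; rewrite inE => /andP[yN yC].
    exact: CsP yC (xmin _ yN).
  exists (x |: C); split=> //.
  apply: extend inv _ _ _ _.
  - by apply: subsetUr.
  - by rewrite subUset sub1set xC s1.
  - by apply/set0Pn; exists x; rewrite in_setI xN /= in_setU1 eqxx.
  - move=> w wj; apply: contra (ne _ wj) => /eqP h.
    by rewrite (mono (subsetUr [set x] C) (esym h)) h0.
case: pickP => [k /and3P[kj /eqP kT _]|H0].
  have jk : j != k by apply: contraTneq kj => ->; rewrite ltnn.
  have Njk : cnbhd e j != cnbhd e k.
    by apply: contra jk => /eqP h; apply/eqP; apply: tf.
  rewrite Njk.
  have sdne : symdiff (cnbhd e j) (cnbhd e k) != set0.
    apply: contra Njk => /eqP h; apply/eqP/setP => z.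
    have := congr1 (fun S : {set 'I_n} => z \in S) h; rewrite /symdiff in_setU !in_setD in_set0.
    by case: (z \in cnbhd e j); case: (z \in cnbhd e k).
  have [x [-> [xS xmin]]] := @set_minP _ sdne.
  have [y yS yC] : exists2 y, y \in symdiff (cnbhd e j) (cnbhd e k) & y \in Cs.
    case: (boolP [exists y, (y \in symdiff (cnbhd e j) (cnbhd e k)) && (y \in Cs)]).
      by case/existsP => y /andP[]; exists y.
    move/existsPn => H; exfalso; apply: (negP (hdi _ _ jk)); apply/eqP/setP => z.
    have := H z; rewrite !in_setI /symdiff in_setU !in_setD.
    by case: (z \in Cs); case: (z \in cnbhd e j); case: (z \in cnbhd e k).
  have xC : x \in Cs by apply: CsP yC (xmin _ yS).
  exists (x |: C); split=> //.
  apply: extend inv _ _ _ _.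
  - by apply: subsetUr.
  - by rewrite subUset sub1set xC s1.
  - by apply: mono0 (subsetUr [set x] C) _; rewrite h0.
  - move=> w wj; case: (eqVneq w k) => [->|wk].
      apply/eqP => /setP/(_ x); rewrite !in_setI !in_setU in_set1 eqxx /= andbT.
      by move: xS; rewrite /symdiff in_setU !in_setD; case: (x \in cnbhd e j); case: (x \in cnbhd e k).
    have := di _ _ wj kj wk; rewrite kT eq_sym; apply: contra => /eqP h.
    by apply/eqP; apply: mono (subsetUr [set x] C) h.
exists C; split=> //.
apply: extend inv (subxx _) s1 _ _; first by rewrite h0.
move=> w wj; apply/negP => /eqP h.
have := H0 w; rewrite wj /= eq_sym h eqxx /=; move/negP; apply.
apply/forallP => k'; apply/implyP => /andP[k'j /eqP k'T].
have : k' == w.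
  case: (eqVneq k' w) => // kw.
  by case/negP: (di _ _ k'j wj kw); rewrite k'T.
by move/eqP ->.
Qed.
End Proof.

Theorem corollary1 (n : nat) (e : rel 'I_n) (m : nat) :
  simple_graph e -> twin_free e -> (1 <= m)%N -> (m <= n)%N ->
  minimal_identifying_code e [set i : 'I_n | (i < m)%N] ->
  lex_algorithm e = Some [set i : 'I_n | (i < m)%N].
Proof.
move=> _ tf _ _ [hid hmin].
have szn : size (ord_enum n) = n by rewrite -(size_map val) val_ord_enum size_iota.
have key : forall k, (k <= n)%N -> exists C,
    foldl (fun oC j => obind (lex_step e j) oC) (Some set0) (take k (ord_enum n)) = Some C
    /\ Inv n e m k C.
  elim=> [|k IH] hk.
    exists set0; split; first by rewrite take0.
    by rewrite /Inv; split; [exact: sub0set | split].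
  have [C [hC inv]] := IH (ltnW hk).
  have sz : (k < size (ord_enum n))%N by rewrite szn.
  pose j := Ordinal hk.
  rewrite (take_nth j sz) foldl_rcons hC /=.
  have -> : nth j (ord_enum n) k = j.
    apply: ord_inj; rewrite -(nth_map j (val j) val sz) val_ord_enum nth_iota //.
  have [C' [h1 h2]] := @step n e m tf hid j C inv.
  by exists C'; split.
have [C [hC [s1 [ne di]]]] := key n (leqnn n).
rewrite take_oversize ?szn // in hC.
rewrite /lex_algorithm hC; congr Some.
apply/eqP; rewrite eqEsubset s1 /=.
apply/negPn/negP => ns; apply: (hmin C).
  by rewrite properEneq s1 andbT; apply: contraNneq ns => ->; exact: subxx.
split=> [v|v w vw]; first exact: ne (ltn_ord v).
exact: di (ltn_ord v) (ltn_ord w) vw.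
Qed.
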